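(* Let $u \in \mathbb{R}^m$, let $T$ be a finite set of vectors in $\mathbb{R}^m$, and let $S = \{v_1, \dots, v_k\}$ be a set of unit vectors in $\mathbb{R}^m$ with $f_u(S) \ge f_u(T)$ and $f_u(S) > 0$. Then $$\sum_{i=1}^k \big(f_u(T \cup \{v_i\}) - f_u(T)\big) \ge \sigma_{\min}(S)\, \frac{\big(f_u(S) - f_u(T)\big)^2}{4 f_u(S)}.$$
   Context: For a finite set $V$ of vectors in $\mathbb{R}^m$, $\Pi_V$ denotes the orthogonal projector onto $\mathrm{span}(V)$, and for $u \in \mathbb{R}^m$, $f_u(V) = \|\Pi_V u\|_2^2$. For a finite set $V$ of unit vectors, $\sigma_{\min}(V)$ is the smallest squared singular value of the matrix with columns $V$, i.e. $\inf_{\|x\|_2 = 1} \|Mx\|_2^2$ for that matrix $M$. *)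

(* Defs.v *)
From HB Require Import structures.
From mathcomp Require Import all_boot all_order all_algebra.
From mathcomp Require Import boolp classical_sets reals.
From Stdlib Require Import ClassicalEpsilon.
Set Implicit Arguments. Unset Strict Implicit. Unset Printing Implicit Defensive.
Import Order.TTheory GRing.Theory Num.Theory.
Local Open Scope ring_scope.

Definition dot (R : realType) (n : nat) (u v : 'rV[R]_n) : R :=
  \sum_(i < n) u 0 i * v 0 i.
Definition sqnorm (R : realType) (n : nat) (u : 'rV[R]_n) : R := dot u u.

Section Defs.
Variables (R : realType) (m : nat).

(* Matrix whose rows are the vectors of the finite family s; its row space
   is span(s). *)
Definition vecmx (s : seq 'rV[R]_m) : 'M[R]_(size s, m) :=
  \matrix_(i < size s) nth 0 s i.

Definition proj (V : seq 'rV[R]_m) (u : 'rV[R]_m) : 'rV[R]_m :=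
  epsilon (inhabits 0) (fun p : 'rV[R]_m =>
    (p <= vecmx V)%MS /\
    forall w : 'rV[R]_m, (w <= vecmx V)%MS -> dot (u - p) w = 0).

Definition f_ (u : 'rV[R]_m) (V : seq 'rV[R]_m) : R := sqnorm (proj V u).

(* sigma_min(V) = inf_{||x||=1} ||M x||^2, M the m x |V| matrix with columns V;
   with rows-representation, M x = x *m vecmx V. *)
Definition sigma_min (V : seq 'rV[R]_m) : R :=
  inf [set sqnorm (x *m vecmx V) | x in [set x : 'rV[R]_(size V) | sqnorm x = 1]].

End Defs.

(* Main.v *)
Require Import Defs.
From HB Require Import structures.
From mathcomp Require Import all_boot all_order all_algebra.
From mathcomp Require Import boolp classical_sets reals.
From mathcomp Require Import ring lra zify.
From Stdlib Require Import ClassicalEpsilon.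
Set Implicit Arguments. Unset Strict Implicit. Unset Printing Implicit Defensive.
Import Order.TTheory GRing.Theory Num.Theory.
Local Open Scope ring_scope.

Section S.
Variables (R : realType) (m : nat).
Implicit Types (a b c : 'rV[R]_m).

Lemma dotE {n} (a b : 'rV[R]_n) : dot a b = (a *m b^T) 0 0.
Proof. by rewrite /dot mxE; apply: eq_bigr => i _; rewrite mxE. Qed.

Lemma dotC {n} (a b : 'rV[R]_n) : dot a b = dot b a.
Proof. by rewrite /dot; apply: eq_bigr => i _; rewrite mulrC. Qed.

Lemma dotDl {n} (a b c : 'rV[R]_n) : dot (a + b) c = dot a c + dot b c.
Proof. by rewrite !dotE mulmxDl mxE. Qed.

Lemma dotNl {n} (a c : 'rV[R]_n) : dot (- a) c = - dot a c.
Proof. by rewrite !dotE mulNmx mxE. Qed.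

Lemma dotBl {n} (a b c : 'rV[R]_n) : dot (a - b) c = dot a c - dot b c.
Proof. by rewrite dotDl dotNl. Qed.

Lemma dotZl {n} k (a c : 'rV[R]_n) : dot (k *: a) c = k * dot a c.
Proof. by rewrite !dotE -scalemxAl mxE. Qed.

Lemma dotDr {n} (a b c : 'rV[R]_n) : dot c (a + b) = dot c a + dot c b.
Proof. by rewrite dotC dotDl !(dotC c). Qed.

Lemma dotBr {n} (a b c : 'rV[R]_n) : dot c (a - b) = dot c a - dot c b.
Proof. by rewrite dotC dotBl !(dotC c). Qed.

Lemma dotZr {n} k (a c : 'rV[R]_n) : dot c (k *: a) = k * dot c a.
Proof. by rewrite dotC dotZl dotC. Qed.

Lemma sqnorm_ge0 {n} (a : 'rV[R]_n) : 0 <= sqnorm a.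
Proof. by rewrite /sqnorm /dot sumr_ge0 // => i _; rewrite -expr2 sqr_ge0. Qed.

Lemma sqnorm_eq0 {n} (a : 'rV[R]_n) : sqnorm a = 0 -> a = 0.
Proof.
rewrite /sqnorm /dot => /eqP; rewrite psumr_eq0 => [/allP H|i _]; last by rewrite -expr2 sqr_ge0.
apply/rowP => i; rewrite mxE; have := H i (mem_index_enum _).
by rewrite /= -expr2 sqrf_eq0 => /eqP.
Qed.

Lemma dot0r {n} (a : 'rV[R]_n) : dot 0 a = 0.
Proof. by rewrite dotE mul0mx mxE. Qed.

Lemma CS {n} (a b : 'rV[R]_n) : dot a b ^+ 2 <= sqnorm a * sqnorm b.
Proof.
have [b0|bn0] := eqVneq (sqnorm b) 0.
  by rewrite b0 mulr0 (sqnorm_eq0 b0) dotC dot0r expr0n.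
have bp : 0 < sqnorm b by rewrite lt0r bn0 sqnorm_ge0.
have := sqnorm_ge0 (sqnorm b *: a - dot a b *: b).
rewrite /sqnorm !(dotBl, dotBr, dotZl, dotZr) (dotC b a) => H.
have : 0 <= sqnorm b * (sqnorm b * sqnorm a - dot a b ^+ 2).
  rewrite /sqnorm; move: H; set x := dot b b; set y := dot a a; set z := dot a b.
  by move=> H; nra.
rewrite pmulr_rge0 // subr_ge0 mulrC //.
Qed.
Lemma sqnorm_row {k} n (B : 'M[R]_(k, n)) i : sqnorm (row i B) = (B *m B^T) i i.
Proof. by rewrite /sqnorm /dot !mxE; apply: eq_bigr => j _; rewrite !mxE. Qed.

Lemma gram_sub {k} (A : 'M[R]_(k, m)) : (A^T <= A *m A^T)%MS.
Proof.
set G := A *m A^T.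
have sGA : (G <= A^T)%MS by rewrite submxMl.
have KA : kermx G *m A = 0.
  set B := kermx G *m A.
  have BB : B *m B^T = 0.
    by rewrite trmx_mul mulmxA -(mulmxA _ A) -/G mulmx_ker mul0mx.
  apply/row_matrixP => i; rewrite row0; apply: sqnorm_eq0.
  by rewrite sqnorm_row BB mxE.
have sK : (kermx G <= kermx A)%MS by apply/sub_kermxP.
have := mxrankS sK; rewrite !mxrank_ker => H.
have rA := rank_leq_row A; have rG := rank_leq_row G.
have le : (\rank A^T <= \rank G)%N.
  rewrite mxrank_tr; move: H rA rG; lia.
by rewrite -(mxrank_leqif_sup sGA).2 eqn_leq le mxrankS.
Qed.

Lemma proj_ex {k} (A : 'M[R]_(k, m)) (u : 'rV[R]_m) :
  exists p, (p <= A)%MS /\ forall w, (w <= A)%MS -> dot (u - p) w = 0.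
Proof.
set G := A *m A^T.
have sub : (u *m A^T <= G)%MS by apply: submx_trans (gram_sub A); apply: submxMl.
set x := u *m A^T *m pinvmx G.
have xG : x *m G = u *m A^T by rewrite mulmxKpV.
exists (x *m A); split; first exact: submxMl.
move=> w /submxP [D ->]; rewrite dotE trmx_mul mulmxA mulmxBl -mulmxA -/G xG.
by rewrite subrr mul0mx mxE.
Qed.
Lemma proj_spec (V : seq 'rV[R]_m) u : (proj V u <= vecmx V)%MS /\
  forall w, (w <= vecmx V)%MS -> dot (u - proj V u) w = 0.
Proof. exact: (epsilon_spec (inhabits (0 : 'rV[R]_m)) _ (proj_ex (vecmx V) u)). Qed.

Lemma proj_sub (V : seq 'rV[R]_m) u : (proj V u <= vecmx V)%MS.
Proof. by case: (proj_spec V u). Qed.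

Lemma proj_dot (V : seq 'rV[R]_m) u w : (w <= vecmx V)%MS ->
  dot u w = dot (proj V u) w.
Proof.
by case: (proj_spec V u) => _ /[apply] /eqP; rewrite dotBl subr_eq0 => /eqP.
Qed.

Lemma sub_cons v (T : seq 'rV[R]_m) : (vecmx T <= vecmx (v :: T))%MS.
Proof.
apply/row_subP => i; rewrite rowK.
have -> : nth 0 T i = row (lift ord0 i) (vecmx (v :: T)) by rewrite rowK.
exact: row_sub.
Qed.

Lemma mem_cons v (T : seq 'rV[R]_m) : (v <= vecmx (v :: T))%MS.
Proof.
by move: (row_sub ord0 (vecmx (v :: T))); rewrite rowK.
Qed.

Lemma gain v (T : seq 'rV[R]_m) u : sqnorm v = 1 ->
  dot (u - proj T u) v ^+ 2 <= f_ u (v :: T) - f_ u T.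
Proof.
move=> v1; rewrite /f_ /sqnorm.
set q := proj (v :: T) u; set p := proj T u.
have pS : (p <= vecmx (v :: T))%MS := submx_trans (proj_sub T u) (sub_cons v T).
have qp : dot q p = dot p p by rewrite -proj_dot // (proj_dot (V:=T)) // proj_sub.
have qv : dot q v = dot u v by rewrite -proj_dot // mem_cons.
have e1 : dot (q - p) v = dot (u - p) v by rewrite !dotBl qv.
have e2 : dot (q - p) (q - p) = dot q q - dot p p.
  rewrite !(dotBl, dotBr) qp (dotC p q) qp; ring.
have := CS (q - p) v; rewrite v1 mulr1 /sqnorm e1 e2 //.
Qed.

Lemma sqnormZ {n} (c : R) (x : 'rV[R]_n) : sqnorm (c *: x) = c ^+ 2 * sqnorm x.
Proof. by rewrite /sqnorm dotZl dotZr mulrA expr2. Qed.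

Lemma sigma_lb (S : seq 'rV[R]_m) (x : 'rV[R]_(size S)) :
  sigma_min S * sqnorm x <= sqnorm (x *m vecmx S).
Proof.
have [x0|xn0] := eqVneq (sqnorm x) 0.
  by rewrite x0 mulr0 sqnorm_ge0.
have xp : 0 < sqnorm x by rewrite lt0r xn0 sqnorm_ge0.
set s := Num.sqrt (sqnorm x).
have sp : 0 < s by rewrite sqrtr_gt0.
have s2 : s ^+ 2 = sqnorm x by rewrite sqr_sqrtr // ltW.
have lb : has_lbound [set sqnorm (x *m vecmx S) | x in
            [set x : 'rV[R]_(size S) | sqnorm x = 1]].
  by exists 0 => y [z _ <-]; apply: sqnorm_ge0.
have H : sigma_min S <= sqnorm ((s^-1 *: x) *m vecmx S).
  apply: (ge_inf lb); exists (s^-1 *: x) => //.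
  by rewrite /= sqnormZ -s2 exprVn mulVf // expf_neq0 // gt_eqF.
rewrite -scalemxAl sqnormZ in H.
apply: (le_trans (ler_wpM2r (sqnorm_ge0 x) H)).
by rewrite -s2 exprVn mulrAC mulVf ?mul1r // expf_neq0 // gt_eqF.
Qed.
Lemma sigma_ge0 (S : seq 'rV[R]_m) : 0 <= sigma_min S.
Proof.
rewrite /sigma_min; set E := (X in inf X).
have [[y Ey]|ne] := pselect (exists y, E y).
  apply: lb_le_inf; first by exists y.
  by move=> z [x _ <-]; apply: sqnorm_ge0.
have -> : E = set0.
  by apply/seteqP; split => z //= Ez; exfalso; apply: ne; exists z.
by rewrite inf0.
Qed.
End S.

Theorem lemma2 (R : realType) (m : nat) (u : 'rV[R]_m)
    (T : seq 'rV[R]_m) (S : seq 'rV[R]_m) :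
  uniq S ->
  (forall v, v \in S -> sqnorm v = 1) ->
  f_ u T <= f_ u S ->
  0 < f_ u S ->
  \sum_(v <- S) (f_ u (v :: T) - f_ u T) >=
    sigma_min S * ((f_ u S - f_ u T) ^+ 2 / (4 * f_ u S)).
Proof.
move=> _ unitS fTS fSp.
set pT := proj T u; set pS := proj S u; set r := u - pT.
set z := proj S r.
case/submxP: (proj_sub S r) => x zx.
set y := r *m (vecmx S)^T.
have rz : dot r z = dot z z := @proj_dot _ _ S r z (proj_sub S r).
have yx : dot y x = sqnorm z.
  by rewrite /sqnorm -rz !dotE /y /z zx trmx_mul mulmxA.
have cs1 := CS y x; rewrite yx in cs1.
have sl := sigma_lb x; rewrite -zx in sl.
have sg := @sigma_ge0 _ _ S.
have Z0 := sqnorm_ge0 z; have X0 := sqnorm_ge0 x; have Y0 := sqnorm_ge0 y.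
have step2 : sigma_min S * sqnorm z <= sqnorm y.
  have [x0|xn0] := eqVneq (sqnorm x) 0.
    rewrite x0 mulr0 in cs1.
    have : sqnorm z = 0 by apply/eqP; rewrite -sqrf_eq0 eq_le cs1 sqr_ge0.
    by move=> ->; rewrite mulr0.
  have xp : 0 < sqnorm x by rewrite lt0r xn0.
  rewrite -(ler_pM2r xp); apply: le_trans cs1.
  by rewrite mulrAC expr2 ler_wpM2r.
have step3 : (f_ u S - f_ u T) ^+ 2 / (4 * f_ u S) <= sqnorm z.
  have e1 : dot r pS = dot z pS := @proj_dot _ _ S r pS (proj_sub S u).
  have e2 : dot u pS = dot pS pS := @proj_dot _ _ S u pS (proj_sub S u).
  have e3 : dot r pS = dot u pS - dot pT pS by rewrite dotBl.
  have cs2 : dot pT pS ^+ 2 <= f_ u T * f_ u S := CS pT pS.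
  have cs3 : dot z pS ^+ 2 <= sqnorm z * f_ u S := CS z pS.
  have fT0 : 0 <= f_ u T := sqnorm_ge0 _.
  have fSe : f_ u S = dot pS pS by [].
  rewrite -e1 e3 e2 -fSe in cs3.
  rewrite ler_pdivrMr ?mulr_gt0 //.
  set b := dot pT pS in cs2 cs3.
  have h1 : f_ u S - f_ u T <= 2 * (f_ u S - b) by nra.
  have h2 : (f_ u S - f_ u T) ^+ 2 <= 4 * (f_ u S - b) ^+ 2.
    have : 0 <= f_ u S - f_ u T by lra.
    nra.
  nra.
have sumge : sqnorm y <= \sum_(v <- S) (f_ u (v :: T) - f_ u T).
  rewrite (big_nth 0) big_mkord /sqnorm /dot; apply: ler_sum => i _.
  have -> : y 0 i = dot r (nth 0 S i).
    by rewrite /y !mxE; apply: eq_bigr => j _; rewrite !mxE.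
  by rewrite -expr2; apply: gain; apply: unitS; apply: mem_nth.
exact: le_trans (ler_wpM2l sg step3) (le_trans step2 sumge).
Qed.
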